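(* Let $0<\eta_n\downarrow0$ be such that $\eta_n\log n\uparrow\infty$ as $n\uparrow\infty$. Set $$\rho_n^{\mathrm{crit}}=c^{\mathrm{crit}}_n\frac{\log n}{n\log2},\qquad c^{\mathrm{crit}}_n=2\Big[1+\frac{\log2}{2\eta_n\log n}\Big(1+\frac{3\log n}{n\log2}\Big)\Big].$$ There exists $\Omega^{\mathrm{CRIT}}\subset\Omega$ with $\mathbb P(\Omega^{\mathrm{CRIT}})=1$ such that on $\Omega^{\mathrm{CRIT}}$, for all but a finite number of indices $n$, for all $\rho\ge\rho_n^{\mathrm{crit}}$, the connected components $C_{n,l}(\rho)$, $1\le l\le L_n(\rho)$, of $V_n(\rho)$ satisfy $$2\le\max_{1\le l\le L_n(\rho)}|C_{n,l}(\rho)|\le n\eta_n .$$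
   Context: Let $\mathcal V_n=\{-1,1\}^n$ with nearest-neighbour (hypercube) graph structure. Let $(g(x))_{x\in\mathcal V_n}$, $n\ge1$, be i.i.d. standard Gaussians on $(\Omega,\mathcal F,\mathbb P)$, $\beta>0$, and $w_n(x)=\exp(-\beta\sqrt ng(x))$. For $\rho>0$ let $r_n(\rho)$ be defined by $2^{\rho n}\mathbb P(w_n(x)\ge r_n(\rho))=1$ and $V_n(\rho)=\{x\in\mathcal V_n:w_n(x)\ge r_n(\rho)\}$. The connected components $C_{n,l}(\rho)$ of $V_n(\rho)$ are the vertex sets of the connected components, with at least two vertices, of the subgraph of the hypercube induced on $V_n(\rho)$ (isolated vertices of $V_n(\rho)$ are not counted as connected components). *)

(* Defs.v *)
From HB Require Import structures.
From mathcomp Require Import all_boot all_order all_algebra.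
From mathcomp Require Import all_classical all_reals all_analysis.
Set Implicit Arguments. Unset Strict Implicit. Unset Printing Implicit Defensive.
Import Order.TTheory GRing.Theory Num.Theory.
Import numFieldNormedType.Exports.
Local Open Scope classical_set_scope.
Local Open Scope ring_scope.

(* Vertices of the hypercube V_n = {-1,1}^n, encoded as boolean vectors
   (true <-> +1, false <-> -1). *)
Definition vertex (n : nat) := {ffun 'I_n -> bool}.

(* Index set of the whole Gaussian family (g(x))_{x in V_n, n >= 0}. *)
Definition gindex := {n : nat & vertex n}.

Definition hadj (n : nat) : rel (vertex n) :=
  fun x y => #|finset (fun i => x i != y i)| == 1%N.

Definition induced_adj (n : nat) (V : {set vertex n}) : rel (vertex n) :=
  fun x y => [&& x \in V, y \in V & hadj x y].

Definition is_component (n : nat) (V : {set vertex n}) (C : {set vertex n}) :=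
  exists2 x, x \in V & C = finset (connect (induced_adj V) x) /\ (2 <= #|C|)%N.

Definition mutually_independent {d} {T : measurableType d} {R : realType}
  (I : eqType) (P : probability T R) (X : I -> T -> R) :=
  forall (s : seq I), uniq s ->
  forall (B : I -> set R), (forall i, measurable (B i)) ->
  P (\bigcap_(i in [set` s]) (X i @^-1` B i)) =
  \big[*%E/1%E]_(i <- s) P (X i @^-1` B i).

Definition wn {T} {R : realType} (beta : R) (g : forall n, vertex n -> T -> R)
  (n : nat) (x : vertex n) (om : T) : R :=
  expR (- (beta * Num.sqrt n%:R * g n x om)).

Definition Vn {T} {R : realType} (beta : R) (g : forall n, vertex n -> T -> R)
  (r : nat -> R -> R) (n : nat) (rho : R) (om : T) : {set vertex n} :=
  finset (fun x => r n rho <= wn beta g x om).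

Definition c_crit {R : realType} (eta : nat -> R) (n : nat) : R :=
  2 * (1 + ln 2 / (2 * eta n * ln n%:R) * (1 + 3 * ln n%:R / (n%:R * ln 2))).

Definition rho_crit {R : realType} (eta : nat -> R) (n : nat) : R :=
  c_crit eta n * ln n%:R / (n%:R * ln 2).

(* Main.v *)
Require Import Defs.
From HB Require Import structures.
From mathcomp Require Import all_boot all_order all_algebra.
From mathcomp Require Import all_classical all_reals all_analysis.
From mathcomp Require Import ring lra zify.
Import Order.TTheory GRing.Theory Num.Theory.
Import numFieldNormedType.Exports.
Local Open Scope classical_set_scope.
Local Open Scope ring_scope.

Section Comb.
Variable n : nat.

Definition vflip (y : vertex n) (d : 'I_n) : vertex n :=
  [ffun j => if j == d then ~~ y j else y j].

Lemma hadj_flip (y z : vertex n) : hadj y z -> exists d, z = vflip y d.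
Proof.
rewrite /hadj => /cards1P [d Hd]; exists d; apply/ffunP => j; rewrite ffunE.
have := congr1 (fun A : {set 'I_n} => j \in A) Hd; rewrite /= !inE.
by case: (j == d); case: (y j); case: (z j).
Qed.

Variable k : nat.

Definition step (x0 : vertex n) (L : seq (vertex n)) (jd : 'I_k * 'I_n) :=
  rcons L (vflip (nth x0 L jd.1) jd.2).

Definition decode (x0 : vertex n) (t : seq ('I_k * 'I_n)) :=
  foldl (step x0) [:: x0] t.

Lemma decode_rcons x0 t a : decode x0 (rcons t a) = step x0 (decode x0 t) a.
Proof. by rewrite /decode foldl_rcons. Qed.

Lemma size_decode x0 t : size (decode x0 t) = (size t).+1.
Proof.
elim/last_ind: t => [//|t a IH].
by rewrite decode_rcons /step size_rcons IH size_rcons.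
Qed.

Lemma mem_decode x0 t : x0 \in decode x0 t.
Proof.
elim/last_ind: t => [|t a IH]; first by rewrite mem_head.
by rewrite decode_rcons /step mem_rcons inE IH orbT.
Qed.

Lemma closed_path (e : rel (vertex n)) (L : seq (vertex n)) :
  (forall y z, y \in L -> e y z -> z \in L) ->
  forall p a, a \in L -> path e a p -> last a p \in L.
Proof.
move=> cl; elim=> [//|b p IH] a aL /= /andP [eab pb].
exact: IH (cl _ _ aL eab) pb.
Qed.

Lemma grow (V : {set vertex n}) x : forall m, (m < k)%N ->
  (m < #|finset (connect (induced_adj V) x)|)%N ->
  exists t : seq ('I_k * 'I_n), [/\ size t = m, uniq (decode x t) &
    all (connect (induced_adj V) x) (decode x t)].
Proof.
elim=> [_ _|m IH mk mC].
  by exists [::]; split => //=; rewrite andbT connect0.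
have [t [st ut at_]] := IH (ltnW mk) (ltnW mC).
set L := decode x t.
have sL : size L = m.+1 by rewrite /L size_decode st.
case: (boolP [exists y, exists z,
   [&& y \in L, induced_adj V y z & z \notin L]]) => [/existsP [y /existsP [z /and3P [yL yz zL]]]|H].
  move: (yz); rewrite /induced_adj => /and3P [_ _ /hadj_flip [d zd]].
  have jk : (index y L < k)%N by rewrite (leq_trans _ (ltnW mk)) // -sL index_mem.
  exists (rcons t (Ordinal jk, d)); split.
  - by rewrite size_rcons st.
  - by rewrite decode_rcons /step /= nth_index // -zd rcons_uniq ut andbT; exact: zL.
  - rewrite decode_rcons /step /= nth_index // -zd all_rcons at_ andbT.
    apply: connect_trans (connect1 yz).
    by move/allP: at_ => /(_ y yL).
exfalso.
have cl : forall y z, y \in L -> induced_adj V y z -> z \in L.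
  move=> y z yL yz; apply/negP => zL; move/negP: H; apply.
  by apply/existsP; exists y; apply/existsP; exists z; rewrite yL yz; apply/negP.
have sub : finset (connect (induced_adj V) x) \subset [pred y | y \in L].
  apply/fintype.subsetP => z; rewrite inE => /connectP [p pp ->].
  by rewrite inE; exact: (closed_path _ _ cl _ _ (mem_decode x t) pp).
have := subset_leq_card sub.
move: (card_size L) => h1 h2.
have := leq_trans h2 h1; rewrite sL; move: mC; rewrite ltnNge => /negP; apply.
Qed.
End Comb.
Arguments decode {n k}.
Arguments vflip {n}.

Lemma connect_inV n (V : {set vertex n}) x y : x \in V ->
  connect (induced_adj V) x y -> y \in V.
Proof.
move=> xV /connectP [p pp ->]; elim: p x xV pp => [//|b p IH] x xV /= /andP [eb pb].
by apply: IH pb; move: eb => /and3P [].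
Qed.

Lemma comp_code n k (V C : {set vertex n}) : is_component V C -> (0 < k)%N ->
  (k <= #|C|)%N -> exists (x0 : vertex n) (t : (k.-1).-tuple ('I_k * 'I_n)),
  uniq (decode x0 (tval t)) && all (fun y => y \in V) (decode x0 (tval t)).
Proof.
move=> [x xV [-> _]] k0 kC.
have h1 : (k.-1 < k)%N by rewrite (prednK k0).
have h2 : (k.-1 < #|finset (connect (induced_adj V) x)|)%N by rewrite (prednK k0).
have [t [st ut at_]] := @grow n k V x k.-1 h1 h2.
have st' : size t == k.-1 by rewrite st.
exists x, (Tuple st'); rewrite /= ut /=.
apply/allP => y /(allP at_); exact: connect_inV.
Qed.

Section Prob.
Variables (R : realType) (d : measure_display) (T : measurableType d)
  (P : probability T R) (g : forall n, vertex n -> T -> R) (beta : R)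
  (r : nat -> R -> R).
Hypothesis hg : forall n (x : vertex n), measurable_fun setT (g n x).

Definition code n k := (vertex n * (k.-1).-tuple ('I_k * 'I_n))%type.
Definition dec n k (c : code n k) := decode c.1 (tval c.2).
Arguments dec {n k}.
Definition Ev n k rho (c : code n k) : set T :=
  [set om | uniq (dec c) && all (fun y => r n rho <= wn beta g y om) (dec c)].
Arguments Ev {n k}.
Definition E n k rho : set T := \big[setU/set0]_(c : code n k) Ev rho c.

Definition Bset n rho : set R :=
  [set t : R | r n rho <= expR (- (beta * Num.sqrt n%:R * t))].

Lemma mBset n rho : measurable (Bset n rho).
Proof.
have -> : Bset n rho = setT `&` ((expR \o ( *%R^~ (- (beta * Num.sqrt n%:R))))
   @^-1` `[r n rho, +oo[%classic).
  apply/seteqP; split => t /=.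
    move=> h; split => //=; rewrite ?in_setE /= ?in_itv /= andbT mulrN mulrC; exact: h.
  by move=> [_]; rewrite ?in_setE /= ?in_itv /= andbT mulrN mulrC.
have H := (measurableT_comp (@measurable_realfun.measurable_expR R) (@measurable_realfun.mulrr_measurable R setT (- (beta * Num.sqrt n%:R))) measurableT (measurable_itv `[r n rho, +oo[)). exact: H.
Qed.

Lemma mev n rho (y : vertex n) : measurable [set om | r n rho <= wn beta g y om].
Proof.
have := hg n y measurableT _ (mBset n rho); rewrite setTI; exact.
Qed.

Lemma mall n rho (s : seq (vertex n)) :
  measurable [set om | all (fun y => r n rho <= wn beta g y om) s].
Proof.
elim: s => [|y s IH] /=.
  have -> : [set om : T | true] = setT by apply/seteqP; split.
  exact: measurableT.
have -> : [set om | (r n rho <= wn beta g y om) && all (fun y => r n rho <= wn beta g y om) s]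
  = [set om | r n rho <= wn beta g y om] `&` [set om | all (fun y => r n rho <= wn beta g y om) s].
  by apply/seteqP; split => om /= => [/andP[]|[-> ->]].
by apply: measurableI; [exact: mev | exact: IH].
Qed.

Lemma mEv n k rho (c : code n k) : measurable (Ev rho c).
Proof.
rewrite /Ev; case: (uniq (dec c)) => /=; first exact: mall.
have -> : [set om : T | false] = set0 by apply/seteqP; split.
exact: measurable0.
Qed.

Hypothesis hind : mutually_independent P (fun i : gindex => g (tag i) (tagged i)).
Hypothesis hr : forall n (rho : R) (x : vertex n), (1 <= n)%N -> 0 < rho ->
     ((2 `^ (rho * n%:R))%:E * P [set om | (r n rho <= wn beta g x om)%R] = 1)%E.

Lemma solve_E (a : R) (x : \bar R) : 0 < a -> (0 <= x)%E -> (a%:E * x = 1)%E ->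
  x = (a^-1)%:E.
Proof.
move=> a0; case: x => [x| |] //= _.
- move=> /eqP; rewrite -EFinM eqe => /eqP h; congr EFin.
  apply: (mulfI (lt0r_neq0 a0)); by rewrite h mulfV // lt0r_neq0.
- by rewrite mulry gtr0_sg // mul1e.
Qed.

Lemma prob1 n rho (y : vertex n) : (1 <= n)%N -> 0 < rho ->
  P [set om | r n rho <= wn beta g y om] = ((2 `^ (rho * n%:R))^-1)%:E.
Proof.
move=> n1 r0; apply: (solve_E _ _ _ _ (hr n rho y n1 r0)).
  by apply: powR_gt0.
exact: measure_ge0.
Qed.

Lemma prob_Ev n k rho (c : code n k) : (1 <= n)%N -> 0 < rho -> uniq (dec c) ->
  P (Ev rho c) = (((2 `^ (rho * n%:R))^-1) ^+ size (dec c))%:E.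
Proof.
move=> n1 r0 uc.
set s := map (fun y : vertex n => Tagged vertex y : gindex) (dec c).
have us : uniq s.
  rewrite map_inj_uniq // => a b h.
  by have := congr1 (tagged_as (Tagged vertex a : gindex)) h; rewrite !tagged_asE.
have := hind s us (fun _ => Bset n rho) (fun _ => mBset n rho).
have -> : \bigcap_(i in [set` s]) ((fun i : gindex => g (tag i) (tagged i)) i @^-1` Bset n rho)
   = Ev rho c.
  apply/seteqP; split => om /=.
    move=> h; rewrite /Ev /= uc /=; apply/allP => y yc.
    have : [set` s] (Tagged vertex y : gindex) by rewrite /= /s; apply/mapP; exists y.
    by move/h.
  rewrite /Ev /= uc /= => /allP h i /= /mapP [y yc ->]; exact: h.
move=> ->; rewrite big_map.
elim: (dec c) => [|y l IH]; first by rewrite big_nil.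
by rewrite big_cons IH [X in (X * _)%E](prob1 n rho y n1 r0) -EFinM exprS.
Qed.

Lemma mu_bigU (I : Type) (s : seq I) (F : I -> set T) :
  (forall i, measurable (F i)) ->
  (P (\big[setU/set0]_(i <- s) F i) <= \sum_(i <- s) P (F i))%E.
Proof.
move=> mF; elim: s => [|i s IH]; first by rewrite !big_nil measure0.
rewrite !big_cons; apply: le_trans (measureU2 _ (mF i) _) _.
  by apply: bigsetU_measurable => j _.
exact: leeD.
Qed.

Lemma card_code n k : #|{: code n k}| = (2 ^ n * (k * n) ^ k.-1)%N.
Proof.
by rewrite card_prod card_tuple card_ffun card_bool card_ord card_prod !card_ord.
Qed.

Lemma prob_E n k rho : (1 <= n)%N -> 0 < rho -> (0 < k)%N ->
  (P (E n k rho) <= ((2 ^ n * (k * n) ^ k.-1)%N%:R * ((2 `^ (rho * n%:R))^-1) ^+ k)%:E)%E.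
Proof.
move=> n1 r0 k0; apply: le_trans (mu_bigU _ _ _ (@mEv n k rho)) _.
apply: (@le_trans _ _ (\sum_(c : code n k) ((((2 `^ (rho * n%:R))^-1) ^+ k)%:E))%E).
  apply: lee_sum => c _.
  case uc: (uniq (dec c)).
    rewrite prob_Ev // /dec size_decode size_tuple prednK //.
  have -> : Ev rho c = set0.
    by apply/seteqP; split => om //=; rewrite /Ev /= uc.
  rewrite measure0 lee_fin; apply: exprn_ge0; rewrite invr_ge0; apply: ltW; exact: powR_gt0.
rewrite sumEFin lee_fin sumr_const card_code mulr_natl.
done.
Qed.

Lemma r_mono n rc rho : (1 <= n)%N -> 0 < rc -> rc <= rho -> r n rc <= r n rho.
Proof.
move=> n1 rc0 le; case: (leP (r n rc) (r n rho)) => // lt; exfalso.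
set x : vertex n := [ffun=> true].
have sub : [set om | r n rc <= wn beta g x om] `<=` [set om | r n rho <= wn beta g x om].
  by move=> om /= h; apply: le_trans (ltW lt) h.
have := le_measure P (mem_set (mev n rc x)) (mem_set (mev n rho x)) sub.
rewrite /= (prob1 n rc x) // (prob1 n rho x) //; last exact: lt_le_trans rc0 le.
rewrite lee_fin.
rewrite lef_pV2 ?posrE ?powR_gt0 // => h.
have : rho * n%:R * ln 2 <= rc * n%:R * ln 2.
  by rewrite -!ln_powR ler_ln ?posrE ?powR_gt0.
rewrite ler_pM2r ?ln_gt0 ?ltr1n // ler_pM2r ?ltr0n // => h2.
have e : rho = rc by apply: le_anti; rewrite h2 le.
by move: lt; rewrite e ltxx.
Qed.

End Prob.

Lemma key (R : realType) (eta : nat -> R) n k : (2 <= n)%N -> 0 < eta n ->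
  n%:R * eta n <= k%:R -> (k <= n)%N -> (0 < k)%N ->
  (2 ^ n * (k * n) ^ k.-1)%N%:R * ((2 `^ (rho_crit eta n * n%:R))^-1) ^+ k
  <= (n%:R * (n.+1)%:R)^-1.
Proof.
move=> n2 e0 kb kn k0.
set a : R := ln 2; set L : R := ln n%:R; set e := eta n.
have a0 : 0 < a by apply: ln_gt0; lra.
have n1 : 1 < n%:R :> R by rewrite ltr1n.
have nR0 : 0 < n%:R :> R by lra.
have L0 : 0 < L by apply: ln_gt0.
set m := a + 3 * L / n%:R.
have m0 : 0 < m by rewrite /m; apply: ltr_wpDr => //; apply: divr_ge0 => //; lra.
have hcl : rho_crit eta n * n%:R * a = 2 * L + m / e.
  rewrite /rho_crit /c_crit -/a -/L -/e /m.
  field; rewrite ?lt0r_neq0 //; apply/and3P; split; rewrite lt0r_neq0 //.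
have hp : 2 `^ (rho_crit eta n * n%:R) = expR (rho_crit eta n * n%:R * a).
  by rewrite /a -ln_powR lnK // posrE powR_gt0.
have h2 : (2 : R) = expR a by rewrite /a lnK // posrE.
rewrite hp -expRN -expRM_natl natrM natrX.
have e1 : (2 : R) ^+ n = expR (n%:R * a) by rewrite expRM_natl -h2.
have hL : expR L = n%:R by rewrite /L lnK // posrE.
have e2 : (k%:R * n%:R) ^+ k.-1 <= expR (k.-1%:R * (2 * L)) :> R.
  rewrite expRM_natl; apply: lerXn2r; rewrite ?nnegrE ?mulr_ge0 ?expR_ge0 //.
  by rewrite -[2]/(2%:R) expRM_natl hL expr2 ler_wpM2r // ?ler_nat // ltW.
have e3 : 2 ^+ n * (k%:R * n%:R) ^+ k.-1 * expR (k%:R * - (rho_crit eta n * n%:R * a))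
   <= expR (n%:R * a + k.-1%:R * (2 * L) + k%:R * - (rho_crit eta n * n%:R * a)).
  rewrite !expRD e1 ler_wpM2r ?expR_ge0 // ler_wpM2l ?expR_ge0 //.
rewrite natrX natrM; apply: le_trans e3 _.
have hk1 : k.-1%:R = k%:R - 1 :> R by rewrite -{2}(prednK k0) -natr1 addrK.
have hkm : n%:R * m <= k%:R * m / e.
  by rewrite ler_pdivlMr // mulrAC ler_wpM2r // ltW.
have hnm : n%:R * m = n%:R * a + 3 * L by rewrite /m; field; rewrite lt0r_neq0.
have ex : n%:R * a + k.-1%:R * (2 * L) + k%:R * - (rho_crit eta n * n%:R * a) <= - (5 * L).
  rewrite hcl hk1.
  have -> : (k%:R - 1) * (2 * L) = 2 * (k%:R * L) - 2 * L by ring.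
  have -> : k%:R * - (2 * L + m / e) = - (2 * (k%:R * L)) - k%:R * m / e by ring.
  move: hkm; rewrite hnm; generalize (k%:R * m / e) (k%:R * L) (n%:R * a) => X Y Z; lra.
apply: (@le_trans _ _ (expR (- (5 * L)))); first by rewrite ler_expR.
rewrite expRN -[5]/(5%:R) expRM_natl hL.
rewrite lef_pV2 ?posrE ?mulr_gt0 ?exprn_gt0 //.
rewrite -natrX -natrM ler_nat.
have h5 : (n.+1 <= n ^ 4)%N.
  have h6 : (n.+1 <= n * n)%N by nia.
  apply: leq_trans h6 _; rewrite !expnS expn0 muln1 mulnA leq_pmull //; nia.
by rewrite expnS leq_mul2l h5 orbT.
Qed.

Lemma rho_pos (R : realType) (eta : nat -> R) n : (2 <= n)%N -> 0 < eta n ->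
  0 < rho_crit eta n.
Proof.
move=> n2 e0.
have a0 : 0 < ln 2 :> R by apply: ln_gt0; lra.
have n1 : 1 < n%:R :> R by rewrite ltr1n.
have nR0 : 0 < n%:R :> R by lra.
have L0 : 0 < ln n%:R :> R by apply: ln_gt0.
rewrite /rho_crit /c_crit; apply: divr_gt0; last exact: mulr_gt0.
apply: mulr_gt0 => //; apply: mulr_gt0; first lra.
apply: addr_gt0; first lra.
apply: mulr_gt0; first by apply: divr_gt0 => //; apply: mulr_gt0 => //; apply: mulr_gt0 => //; lra.
apply: addr_gt0; first lra.
by apply: divr_gt0; [apply: mulr_gt0 => //; lra | exact: mulr_gt0].
Qed.

Lemma sum_fin (R : realType) (u : nat -> \bar R) N1 : (1 <= N1)%N ->
  (forall n, (0 <= u n)%E) -> (forall n, (u n <= 1)%E) ->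
  (forall n, (N1 <= n)%N -> (u n <= ((n%:R * (n.+1)%:R)^-1)%:E)%E) ->
  (\sum_(0 <= n <oo) u n < +oo)%E.
Proof.
move=> N11 u0 u1 ub.
have A : forall m, (\sum_(0 <= i < m) u i <= m%:R%:E)%E.
  elim=> [|m IH]; first by rewrite big_geq.
  rewrite big_nat_recr //= -natr1 EFinD; exact: leeD.
have B : forall j, (\sum_(0 <= i < N1 + j) u i <= (N1%:R + 1 - (N1 + j)%:R^-1)%:E)%E.
  elim=> [|j IH].
    rewrite addn0; apply: le_trans (A N1) _; rewrite lee_fin.
    have : (N1%:R^-1 : R) <= 1 by rewrite invf_le1 ?ler1n ?ltr0n.
    lra.
  rewrite addnS big_nat_recr //=; apply: le_trans (leeD IH (ub _ (leq_addr _ _))) _.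
  rewrite -EFinD lee_fin.
  have p0 : 0 < (N1 + j)%:R :> R by rewrite ltr0n; apply: leq_trans N11 (leq_addr _ _).
  have -> : (N1 + j).+1%:R = (N1 + j)%:R + 1 :> R by rewrite -natr1.
  set p := (N1 + j)%:R.
  have -> : N1%:R + 1 - p^-1 + (p * (p + 1))^-1 = N1%:R + 1 - (p + 1)^-1.
    field; rewrite -natrD; apply/andP; split; apply: lt0r_neq0; lra.
  done.
have C : forall m, (\sum_(0 <= i < m) u i <= (N1%:R + 1)%:E)%E.
  move=> m; case: (leqP m N1) => hm.
    apply: le_trans (A m) _; rewrite lee_fin; have : m%:R <= N1%:R :> R by rewrite ler_nat.
    lra.
  rewrite -(subnKC (ltnW hm)); apply: le_trans (B _) _; rewrite lee_fin.
  have : 0 <= (N1 + (m - N1))%:R^-1 :> R by rewrite invr_ge0.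
  lra.
apply: (@le_lt_trans _ _ (N1%:R + 1)%:E); last exact: ltey.
apply: lime_le; first exact: is_cvg_nneseries.
exact: nearW.
Qed.

Lemma in_bigU (T : Type) (I : finType) (F : I -> set T) i x : F i x ->
  (\big[setU/set0]_(j : I) F j) x.
Proof.
move=> h; rewrite (bigD1 i) //=; by left.
Qed.

Theorem lemma2p1 (R : realType) (d : measure_display) (T : measurableType d)
  (P : probability T R) (g : forall n, vertex n -> T -> R) (beta : R)
  (eta : nat -> R) (r : nat -> R -> R) :
  (forall n (x : vertex n), measurable_fun setT (g n x)) ->
  (forall n (x : vertex n) (B : set R), measurable B ->
     P (g n x @^-1` B) = normal_prob 0 1 B) ->
  mutually_independent P (fun i : gindex => g (tag i) (tagged i)) ->
  0 < beta ->
  (forall n (rho : R) (x : vertex n), (1 <= n)%N -> 0 < rho ->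
     ((2 `^ (rho * n%:R))%:E * P [set om | (r n rho <= wn beta g x om)%R] = 1)%E) ->
  (forall n, (1 <= n)%N -> 0 < eta n) ->
  (forall m n, (1 <= m)%N -> (m <= n)%N -> eta n <= eta m) ->
  eta @ \oo --> 0 ->
  (forall m n, (1 <= m)%N -> (m <= n)%N -> eta m * ln m%:R <= eta n * ln n%:R) ->
  (fun n => eta n * ln n%:R) @ \oo --> +oo ->
  exists2 OmCrit : set T, measurable OmCrit /\ P OmCrit = 1%E &
    forall om, OmCrit om ->
      \forall n \near \oo, forall rho, rho_crit eta n <= rho ->
        forall C : {set vertex n}, is_component (Vn beta g r n rho om) C ->
          (2 <= #|C|)%N /\ #|C|%:R <= n%:R * eta n.
Proof.
move=> hg _ hind _ hr heta _ h0 _ _.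
pose kk n := (Num.Def.trunc (n%:R * eta n)).+1.
pose F n := E R d T g beta r n (kk n) (rho_crit eta n).
have mF : forall n, measurable (F n).
  by move=> n; apply: bigsetU_measurable => c _; apply: mEv.
have H12 : \forall n \near \oo, eta n < 2^-1.
  by apply: (cvgr_lt 0 h0); rewrite invr_gt0.
case: H12 => N0 _ HN0.
set N1 := maxn N0 2.
have N12 : (2 <= N1)%N by rewrite leq_maxr.
have bound : forall n, (N1 <= n)%N -> (P (F n) <= ((n%:R * (n.+1)%:R)^-1)%:E)%E.
  move=> n hn.
  have n2 : (2 <= n)%N by apply: leq_trans hn.
  have en : eta n < 2^-1 by apply: HN0; apply: leq_trans hn; rewrite leq_maxl.
  have e0 : 0 < eta n by apply: heta; apply: leq_trans n2.
  have r0 := @rho_pos _ eta n n2 e0.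
  have xe0 : 0 <= n%:R * eta n by apply: mulr_ge0 => //; exact: ltW.
  have /andP [t1 t2] := truncn_itv xe0.
  have kb : n%:R * eta n <= (kk n)%:R by exact: ltW.
  have kn : (kk n <= n)%N.
    rewrite -(ler_nat R) /kk -natr1.
    have : n%:R * eta n <= n%:R * 2^-1 by rewrite ler_wpM2l // ltW.
    have : (2 : R) <= n%:R by rewrite (ler_nat R 2).
    lra.
  apply: le_trans (@prob_E R d T P g beta r hg hind hr n (kk n) (rho_crit eta n) _ r0 _) _.
  - exact: leq_trans n2.
  - done.
  rewrite lee_fin; exact: key.
have sumfin : (\sum_(0 <= n <oo) P (F n) < +oo)%E.
  apply: (@sum_fin R _ N1).
  - exact: leq_trans N12.
  - by move=> n; exact: measure_ge0.
  - by move=> n; exact: probability_le1.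
  - exact: bound.
have P0 : P (lim_sup_set F) = 0%E by apply: lim_sup_set_cvg0.
have mL : measurable (lim_sup_set F).
  apply: bigcap_measurable => [|k _]; first by exists 0.
  by apply: bigcup_measurable => j _; exact: mF.
exists (~` lim_sup_set F).
  by split; [exact: measurableC | rewrite probability_setC // P0 sube0].
move=> om Hom.
have [N2 HN2] : exists N2, forall j, (N2 <= j)%N -> ~ F j om.
  apply: contrapT => H; apply: Hom => N _; apply: contrapT => H2; apply: H.
  by exists N => j Nj Fj; apply: H2; exists j.
exists (maxn N1 N2) => // n /= hn rho hrho C hC.
have hn1 : (N1 <= n)%N by apply: leq_trans hn; rewrite leq_maxl.
have hn2 : (N2 <= n)%N by apply: leq_trans hn; rewrite leq_maxr.
split; first by case: hC => x _ [_ ->].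
case: (leP (#|C|%:R) (n%:R * eta n)) => // hlt; exfalso.
have n2 : (2 <= n)%N by apply: leq_trans hn1.
have e0 : 0 < eta n by apply: heta; apply: leq_trans n2.
have r0 := @rho_pos _ eta n n2 e0.
have xe0 : 0 <= n%:R * eta n by apply: mulr_ge0 => //; exact: ltW.
have /andP [t1 t2] := truncn_itv xe0.
have kC : (kk n <= #|C|)%N.
  rewrite /kk; rewrite -(ltr_nat R); exact: le_lt_trans t1 hlt.
have [x0 [t /andP [ut at_]]] := @comp_code n (kk n) _ _ hC (ltn0Sn _) kC.
apply: (HN2 n hn2).
rewrite /F /E; apply: (@in_bigU _ _ _ (x0, t)).
rewrite /Ev /dec /= ut /=; apply/allP => y yc.
have := allP at_ y yc; rewrite inE => h.
apply: le_trans h; apply: (@r_mono R d T P g beta r hg hr n) => //.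
exact: leq_trans n2.
Qed.
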